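(* Let $T\cup\{\varphi\}$ be a set of $\mathcal P^{\mathbf A}$-sentences. Then $\varphi$ is preserved under substructures of models of $T$ (i.e. whenever $\langle\mathbf A,\mathbf M\rangle\subseteq\langle\mathbf A,\mathbf N\rangle$ are models of $T$ and $\|\varphi\|_{\mathbf N}=1$, then $\|\varphi\|_{\mathbf M}=1$) if and only if there is a universal $\mathcal P^{\mathbf A}$-sentence $\psi$ that is 1-equivalent to $\varphi$ modulo $T$, i.e. for every model $\langle\mathbf A,\mathbf M\rangle$ of $T$, $\|\varphi\|_{\mathbf M}=1$ iff $\|\psi\|_{\mathbf M}=1$.
   Context: Fix a finite MTL-chain $\mathbf{A}$ (a finite linearly ordered MTL-algebra, possibly expanded with further operations), with top $1$ and bottom $0$. For a predicate language $\mathcal P$ containing a crisp equality symbol $\approx$, an $\mathbf{A}$-structure $\langle \mathbf A,\mathbf M\rangle$ consists of a nonempty domain $M$, functions $F_{\mathbf M}:M^n\to M$ for $n$-ary function symbols, and maps $P_{\mathbf M}:M^n\to A$ for $n$-ary predicate symbols; $\approx$ takes value $1$ on equal and $0$ on distinct elements. Truth values $\|\cdot\|_{\mathbf M}$ are computed Tarski-style: connectives by the operations of $\mathbf A$, $\forall$ by infimum, $\exists$ by supremum over the domain. A model of $T$ is a structure in which all sentences of $T$ have value $1$. $\mathcal P^{\mathbf A}$ is $\mathcal P$ expanded by a truth constant $\overline a$ for each $a\in A$, always interpreted as $a$; all structures are over the fixed $\mathbf A$. $\langle\mathbf A,\mathbf M\rangle\subseteq\langle\mathbf A,\mathbf N\rangle$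 (substructure): $M\subseteq N$ with function and predicate symbols interpreted by restriction. A universal sentence has the form $(\forall\overrightarrow x)\psi$ with $\psi$ quantifier-free. *)

(* Defs.v *)
From HB Require Import structures.
From mathcomp Require Import all_boot all_order.
From Stdlib Require Import ClassicalEpsilon.
Set Implicit Arguments. Unset Strict Implicit. Unset Printing Implicit Defensive.
Import Order.TTheory.
Local Open Scope order_scope.

Definition pb (P : Prop) : bool :=
  if excluded_middle_informative P then true else false.

(* A finite MTL-chain: a finite bounded chain A (bottom 0 = \bot, top 1 = \top,
   lattice operations = meet/join of the chain) with a commutative associative
   monoid operation & with unit \top and its residuum ->.  (Integrality holds
   since \top is the top; prelinearity holds automatically in a chain.)
   It may be expanded with further operations xint o of arity xar o. *)
Record MTLchain (d : Order.disp_t) (A : finTBOrderType d) := {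
  mconj : A -> A -> A;
  mimp  : A -> A -> A;
  mconjC : commutative mconj;
  mconjA : associative mconj;
  mconj1 : right_id \top mconj;
  mresid : forall x y z : A, (mconj x y <= z) = (x <= mimp y z);
  xop : Type;
  xar : xop -> nat;
  xint : forall o : xop, ('I_(xar o) -> A) -> A }.

(* A predicate language: function symbols (constants = 0-ary) and predicate
   symbols with arities; the crisp equality is a separate built-in. *)
Record Lang := {
  Fsym : Type; far : Fsym -> nat;
  Psym : Type; par : Psym -> nat }.

Unset Implicit Arguments.
Inductive term (L : Lang) : Type :=
| Var of nat
| App (f : Fsym L) of ('I_(far f) -> term L).
Set Implicit Arguments.
Arguments Var {L} _.
Arguments App {L} f _.

Unset Implicit Arguments.
Inductive form (L : Lang) (A : Type) (X : Type) (ar : X -> nat) : Type :=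
| FPred (p : Psym L) of ('I_(par p) -> term L)
| FEq of term L & term L
| FConst of A
| FConj of form L A X ar & form L A X ar
| FImp of form L A X ar & form L A X ar
| FMeet of form L A X ar & form L A X ar
| FJoin of form L A X ar & form L A X ar
| FOp (o : X) of ('I_(ar o) -> form L A X ar)
| FAll of nat & form L A X ar
| FEx of nat & form L A X ar.
Set Implicit Arguments.
Arguments FPred {L A X ar} p _.
Arguments FEq {L A X ar} _ _.
Arguments FConst {L A X ar} _.
Arguments FConj {L A X ar} _ _.
Arguments FImp {L A X ar} _ _.
Arguments FMeet {L A X ar} _ _.
Arguments FJoin {L A X ar} _ _.
Arguments FOp {L A X ar} o _.
Arguments FAll {L A X ar} _ _.
Arguments FEx {L A X ar} _ _.

Definition fml (L : Lang) d (A : finTBOrderType d) (S : MTLchain A) :=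
  form L A (xop S) (@xar d A S).

Record structure (L : Lang) (A : Type) := {
  dom : Type;
  dom_ne : inhabited dom;
  fint : forall f : Fsym L, ('I_(far f) -> dom) -> dom;
  pint : forall p : Psym L, ('I_(par p) -> dom) -> A }.

Fixpoint teval (L : Lang) (A : Type) (M : structure L A) (e : nat -> dom M)
    (t : term L) : dom M :=
  match t with
  | Var n => e n
  | App f ts => @fint _ _ M f (fun i => teval e (ts i))
  end.

Definition upd (D : Type) (e : nat -> D) (x : nat) (m : D) : nat -> D :=
  fun n => if n == x then m else e n.

Definition infA d (A : finTBOrderType d) (D : Type) (f : D -> A) : A :=
  \join_(a | pb (forall m, a <= f m)) a.
Definition supA d (A : finTBOrderType d) (D : Type) (f : D -> A) : A :=
  \meet_(a | pb (forall m, f m <= a)) a.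

Fixpoint eval (L : Lang) d (A : finTBOrderType d) (S : MTLchain A)
    (M : structure L A) (e : nat -> dom M) (phi : fml L S) : A :=
  match phi with
  | FPred p ts => @pint _ _ M p (fun i => teval e (ts i))
  | FEq t1 t2 => if pb (teval e t1 = teval e t2) then \top else \bot
  | FConst a => a
  | FConj p q => mconj S (eval e p) (eval e q)
  | FImp p q => mimp S (eval e p) (eval e q)
  | FMeet p q => Order.meet (eval e p) (eval e q)
  | FJoin p q => Order.join (eval e p) (eval e q)
  | FOp o args => @xint _ _ S o (fun i => eval e (args i))
  | FAll x p => infA (fun m => eval (upd e x m) p)
  | FEx x p => supA (fun m => eval (upd e x m) p)
  end.

Fixpoint tfree (L : Lang) (x : nat) (t : term L) : bool :=
  match t with
  | Var n => n == x
  | App f ts => [exists i, tfree x (ts i)]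
  end.

Fixpoint free (L : Lang) (A X : Type) (ar : X -> nat) (x : nat)
    (phi : form L A X ar) : bool :=
  match phi with
  | FPred p ts => [exists i, tfree x (ts i)]
  | FEq t1 t2 => tfree x t1 || tfree x t2
  | FConst _ => false
  | FConj p q | FImp p q | FMeet p q | FJoin p q => free x p || free x q
  | FOp o args => [exists i, free x (args i)]
  | FAll y p | FEx y p => (x != y) && free x p
  end.

Definition sentence (L : Lang) (A X : Type) (ar : X -> nat)
  (phi : form L A X ar) : Prop := forall x, ~~ free x phi.

Fixpoint qfree (L : Lang) (A X : Type) (ar : X -> nat)
    (phi : form L A X ar) : bool :=
  match phi with
  | FPred _ _ | FEq _ _ | FConst _ => true
  | FConj p q | FImp p q | FMeet p q | FJoin p q => qfree p && qfree q
  | FOp o args => [forall i, qfree (args i)]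
  | FAll _ _ | FEx _ _ => false
  end.

Definition universal (L : Lang) (A X : Type) (ar : X -> nat)
  (phi : form L A X ar) : Prop :=
  exists (xs : seq nat) (psi : form L A X ar),
    qfree psi /\ phi = foldr (@FAll L A X ar) psi xs.

(* ||phi||_M = 1 (for a sentence phi the value does not depend on e) *)
Definition holds (L : Lang) d (A : finTBOrderType d) (S : MTLchain A)
  (M : structure L A) (phi : fml L S) : Prop :=
  forall e : nat -> dom M, eval e phi = \top.

Definition model (L : Lang) d (A : finTBOrderType d) (S : MTLchain A)
  (T : fml L S -> Prop) (M : structure L A) : Prop :=
  forall chi, T chi -> holds M chi.

Definition substr (L : Lang) (A : Type) (M N : structure L A)
  (h : dom M -> dom N) : Prop :=
  injective h /\
  (forall f args, h (@fint _ _ M f args) = @fint _ _ N f (fun i => h (args i))) /\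
  (forall p args, @pint _ _ N p (fun i => h (args i)) = @pint _ _ M p args).

Definition preserved_sub (L : Lang) d (A : finTBOrderType d) (S : MTLchain A)
  (T : fml L S -> Prop) (phi : fml L S) : Prop :=
  forall (M N : structure L A) (h : dom M -> dom N),
    substr h -> model T M -> model T N -> holds N phi -> holds M phi.

(* Main.v *)
Require Import Defs.
From mathcomp Require Import all_boot all_order.
From mathcomp Require classical_sets filter boolp.
From Stdlib Require Import ClassicalEpsilon Classical FunctionalExtensionality PropExtensionality ProofIrrelevance.
From Stdlib Require List.
Set Implicit Arguments. Unset Strict Implicit. Unset Printing Implicit Defensive.
Import Order.TTheory.
Local Open Scope order_scope.

Record ultra (I : Type) (U : (I -> Prop) -> Prop) := {
 uT : U (fun _ => True);
 u0 : ~ U (fun _ => False);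
 uI : forall P Q, U P -> U Q -> U (fun i => P i /\ Q i);
 uS : forall P Q : I -> Prop, (forall i, P i -> Q i) -> U P -> U Q;
 uC : forall P, U P \/ U (fun i => ~ P i) }.

Arguments ultra {I} U.
Arguments uT {I U}. Arguments u0 {I U}. Arguments uI {I U} _ {P Q}. Arguments uS {I U} _ {P Q}. Arguments uC {I U}.
Module UF.
Import classical_sets filter boolp.
Lemma ultra_ex (I J : Type) (Bs : J -> I -> Prop) :
  inhabited J ->
  (forall j, exists i, Bs j i) ->
  (forall j1 j2, exists j3, forall i, Bs j3 i -> Bs j1 i /\ Bs j2 i) ->
  exists U : (I -> Prop) -> Prop, ultra U /\ forall j, U (Bs j).
Proof.
move=> [j0] ne dir.
have FF : ProperFilter (filter_from setT (fun j => Bs j : set I)).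
  apply: filter_from_proper.
    apply: filter_from_filter; first by exists j0.
    move=> j1 j2 _ _; have [j3 H] := dir j1 j2; exists j3 => // i /H [] ? ?; by split.
  move=> j _; have [i Hi] := ne j; by exists i.
have [G [GU sFG]] := ultraFilterLemma FF.
exists G; split; last first.
  by move=> j; apply: sFG; exists j.
split.
- exact: (@filterT _ G).
- exact: (@filter_not_empty _ G).
- move=> P Q HP HQ; exact: (@filterI _ G _ P Q HP HQ).
- move=> P Q PQ HP; exact: (@filterS _ G _ P Q PQ HP).
- move=> P; exact: (in_ultra_setVsetC P GU).
Qed.
End UF.


Lemma pbP (P : Prop) : pb P = true <-> P.
Proof. rewrite /pb; case: excluded_middle_informative => //. Qed.

Section ABasics.
Variables (d : Order.disp_t) (A : finTBOrderType d).

Lemma infA_lb (D : Type) (f : D -> A) m : infA f <= f m.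
Proof. apply/joinsP => a /pbP; apply. Qed.

Lemma infA_glb (D : Type) (f : D -> A) a : (forall m, a <= f m) -> a <= infA f.
Proof. move=> H; apply: (@joins_sup _ _ _ a) => //; exact/pbP. Qed.

Lemma supA_ub (D : Type) (f : D -> A) m : f m <= supA f.
Proof. apply/meetsP => a /pbP; apply. Qed.

Lemma supA_lub (D : Type) (f : D -> A) a : (forall m, f m <= a) -> supA f <= a.
Proof. move=> H; apply: (@meets_inf _ _ _ a) => //; exact/pbP. Qed.

Lemma seq_min (s : seq A) x0 : x0 \in s -> exists2 v, v \in s & forall w, w \in s -> v <= w.
Proof.
elim: s x0 => // a s IH x0; rewrite inE => _.
case: (boolP (has (fun w => w \in s) s)) => [/hasP [w ws _]|].
  have [v vs Hv] := IH w ws.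
  case: (leP a v) => [av|va].
    exists a; first by rewrite inE eqxx.
    by move=> w'; rewrite inE => /orP [/eqP ->//| /Hv]; apply: le_trans.
  exists v; first by rewrite inE vs orbT.
  move=> w'; rewrite inE => /orP [/eqP ->| /Hv //]; exact: ltW.
move=> /hasPn H; exists a; first by rewrite inE eqxx.
by move=> w; rewrite inE => /orP [/eqP ->//| ws]; move: (H w ws); rewrite ws.
Qed.

Lemma infA_att (D : Type) (f : D -> A) : inhabited D -> exists m, f m = infA f.
Proof.
move=> [m0].
set s := [seq v <- enum A | pb (exists m, f m = v)].
have Hin : f m0 \in s by rewrite mem_filter mem_enum andbT; apply/pbP; exists m0.
have [v vs Hv] := seq_min Hin.
move: vs; rewrite mem_filter => /andP [/pbP [m fm] _].
exists m; apply/eqP; rewrite eq_le infA_lb andbT.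
apply: infA_glb => m'; rewrite fm; apply: Hv.
by rewrite mem_filter mem_enum andbT; apply/pbP; exists m'.
Qed.

Lemma seq_max (s : seq A) x0 : x0 \in s -> exists2 v, v \in s & forall w, w \in s -> w <= v.
Proof.
elim: s x0 => // a s IH x0; rewrite inE => _.
case: (boolP (has (fun w => w \in s) s)) => [/hasP [w ws _]|].
  have [v vs Hv] := IH w ws.
  case: (leP v a) => [av|va].
    exists a; first by rewrite inE eqxx.
    by move=> w'; rewrite inE => /orP [/eqP ->//| /Hv] => h; apply: le_trans h av.
  exists v; first by rewrite inE vs orbT.
  move=> w'; rewrite inE => /orP [/eqP ->| /Hv //]; exact: ltW.
move=> /hasPn H; exists a; first by rewrite inE eqxx.
by move=> w; rewrite inE => /orP [/eqP ->//| ws]; move: (H w ws); rewrite ws.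
Qed.

Lemma supA_att (D : Type) (f : D -> A) : inhabited D -> exists m, f m = supA f.
Proof.
move=> [m0].
set s := [seq v <- enum A | pb (exists m, f m = v)].
have Hin : f m0 \in s by rewrite mem_filter mem_enum andbT; apply/pbP; exists m0.
have [v vs Hv] := seq_max Hin.
move: vs; rewrite mem_filter => /andP [/pbP [m fm] _].
exists m; apply/eqP; rewrite eq_le supA_ub /=.
apply: supA_lub => m'; rewrite fm; apply: Hv.
by rewrite mem_filter mem_enum andbT; apply/pbP; exists m'.
Qed.

End ABasics.


Lemma sig_eq (T : Type) (P : T -> Prop) (a b : T) (p : P a) (q : P b) :
  a = b -> exist P a p = exist P b q.
Proof. move=> E; subst; congr exist; apply: proof_irrelevance. Qed.

Section Ultra.
Variables (d : Order.disp_t) (A : finTBOrderType d) (S : MTLchain A) (L : Lang).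
Variables (I : Type) (U : (I -> Prop) -> Prop) (HU : ultra U) (Ms : I -> structure L A).

Lemma uM (P Q : I -> Prop) : U P -> (forall i, P i -> Q i) -> U Q.
Proof. move=> H1 H2; exact: (uS HU H2 H1). Qed.

Lemma U_ne P : U P -> exists i, P i.
Proof.
move=> HP; apply: NNPP => H; apply: (u0 HU); apply: (uM HP) => i Pi.
by apply: H; exists i.
Qed.

Lemma U_list (J : eqType) (s : seq J) (P : J -> I -> Prop) :
  (forall j, U (P j)) -> U (fun i => forall j, j \in s -> P j i).
Proof.
move=> H; elim: s => [|a s IH].
  by apply: (uM (uT HU)).
apply: (uM (uI HU (H a) IH)) => i [Pa Ps] j; rewrite inE => /orP [/eqP ->//|]; exact: Ps.
Qed.

Lemma U_fin (J : finType) (P : J -> I -> Prop) :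
  (forall j, U (P j)) -> U (fun i => forall j, P j i).
Proof.
move=> H; apply: (uM (U_list (enum J) H)) => i Hi j; apply: Hi; by rewrite mem_enum.
Qed.

Definition lim (b : I -> A) : A :=
  epsilon (inhabits \top) (fun a => U (fun i => b i = a)).

Lemma lim_spec b : U (fun i => b i = lim b).
Proof.
rewrite /lim; apply: (epsilon_spec (inhabits (\top : A)) (fun a => U (fun i => b i = a))); apply: NNPP => H.
have H1 : forall a : A, U (fun i => b i <> a).
  move=> a; case: (uC HU (fun i => b i = a)) => // Ha.
  by exfalso; apply: H; exists a.
have := U_fin H1; move/U_ne => [i Hi]; exact: (Hi (b i)).
Qed.

Lemma lim_eq b a : U (fun i => b i = a) -> lim b = a.
Proof.
move=> H; have [i [H1 H2]] := U_ne (uI HU H (lim_spec b)).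
by rewrite -H1 -H2.
Qed.

Lemma lim_const a : lim (fun _ => a) = a.
Proof. apply: lim_eq; exact: (uM (uT HU)). Qed.

Lemma lim2 (f : A -> A -> A) b c : lim (fun i => f (b i) (c i)) = f (lim b) (lim c).
Proof.
apply: lim_eq; apply: (uM (uI HU (lim_spec b) (lim_spec c))) => i [-> ->] //.
Qed.

Lemma limn n (f : ('I_n -> A) -> A) (b : 'I_n -> I -> A) :
  lim (fun i => f (fun j => b j i)) = f (fun j => lim (b j)).
Proof.
apply: lim_eq; apply: (uM (U_fin (fun j => lim_spec (b j)))) => i H.
by congr f; apply: functional_extensionality => j; rewrite H.
Qed.

Definition Pr := forall i, dom (Ms i).
Definition R (x y : Pr) : Prop := U (fun i => x i = y i).
Definition Dst := {P : Pr -> Prop | exists x, P = R x}.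
Definition cls (x : Pr) : Dst := exist _ (R x) (ex_intro _ x erefl).
Definition rep (m : Dst) : Pr := proj1_sig (constructive_indefinite_description _ (proj2_sig m)).

Lemma cls_rep m : cls (rep m) = m.
Proof.
rewrite /cls /rep; case: m => P HP /=.
case: constructive_indefinite_description => x Hx /=.
subst P; congr exist; apply: proof_irrelevance.
Qed.

Lemma R_refl x : R x x.
Proof. exact: (uM (uT HU)). Qed.
Lemma R_sym x y : R x y -> R y x.
Proof. by rewrite /R => H; apply: (uM H) => i ->. Qed.
Lemma R_trans x y z : R x y -> R y z -> R x z.
Proof. move=> H1 H2; apply: (uM (uI HU H1 H2)) => i [-> ->] //. Qed.

Lemma cls_eq x y : cls x = cls y <-> R x y.
Proof.
split.
  move=> H; have : R x = R y by move: (f_equal (@proj1_sig _ _) H).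
  move=> E; apply: R_sym; rewrite -E; exact: R_refl.
move=> H; rewrite /cls.
have E : R x = R y.
  apply: functional_extensionality => z; apply: propositional_extensionality.
  split; [apply: R_trans; exact: R_sym | exact: R_trans].
exact: sig_eq.
Qed.

Lemma R_rep_cls x : R (rep (cls x)) x.
Proof. apply/cls_eq; exact: cls_rep. Qed.

Definition ne_pt (i : I) : dom (Ms i) := epsilon (dom_ne (Ms i)) (fun _ => True).

Definition fintU (f : Fsym L) (args : 'I_(far f) -> Dst) : Dst :=
  cls (fun i => @fint _ _ (Ms i) f (fun j => rep (args j) i)).
Definition pintU (p : Psym L) (args : 'I_(par p) -> Dst) : A :=
  lim (fun i => @pint _ _ (Ms i) p (fun j => rep (args j) i)).
Arguments fintU : simpl never.
Arguments pintU : simpl never.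

Definition Ust : structure L A := {|
  dom := Dst;
  dom_ne := inhabits (cls ne_pt);
  fint := fintU;
  pint := pintU |}.

Lemma fint_cls f (xs : 'I_(far f) -> Pr) :
  fintU (fun j => cls (xs j)) = cls (fun i => @fint _ _ (Ms i) f (fun j => xs j i)).
Proof.
apply/cls_eq; apply: (uM (U_fin (fun j => R_rep_cls (xs j)))) => i H; rewrite /fintU.
by congr fint; apply: functional_extensionality => j; rewrite H.
Qed.

Lemma pint_cls p (xs : 'I_(par p) -> Pr) :
  pintU (fun j => cls (xs j)) = lim (fun i => @pint _ _ (Ms i) p (fun j => xs j i)).
Proof.
rewrite /= /pintU; apply: lim_eq; apply: (uM (uI HU (U_fin (fun j => R_rep_cls (xs j))) (lim_spec (fun i => @pint _ _ (Ms i) p (fun j => xs j i))))) => i [H <-] /=.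
by congr pint; apply: functional_extensionality => j; rewrite H.
Qed.

Definition cenv (X : forall i, nat -> dom (Ms i)) : nat -> dom Ust :=
  fun n => cls (fun i => X i n).

Lemma teval_cls X t : teval (cenv X) t = cls (fun i => teval (X i) t).
Proof.
elim: t => [n|f ts IH] //; change (@fint _ _ Ust f (fun i => teval (cenv X) (ts i)) = cls (fun i => @fint _ _ (Ms i) f (fun j => teval (X i) (ts j)))).
have -> : (fun i => teval (cenv X) (ts i)) = fun j => cls (fun i => teval (X i) (ts j)).
  by apply: functional_extensionality => j; rewrite IH.
exact: fint_cls.
Qed.

Lemma upd_cenv X x y :
  upd (cenv X) x (cls y) = cenv (fun i => upd (X i) x (y i)).
Proof.
apply: functional_extensionality => n; rewrite /upd /cenv; case: (n == x) => //.
Qed.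

Lemma los (phi : fml L S) X :
  eval (cenv X) phi = lim (fun i => eval (X i) phi).
Proof.
elim: phi X => [p ts|t1 t2|a|p IHp q IHq|p IHp q IHq|p IHp q IHq|p IHp q IHq|o args IH|x p IH|x p IH] X /=.
- rewrite (_ : (fun i => teval (cenv X) (ts i)) = fun j => cls (fun i => teval (X i) (ts j))).
    by rewrite pint_cls.
  by apply: functional_extensionality => j; rewrite teval_cls.
- rewrite !teval_cls; case: (uC HU (fun i => teval (X i) t1 = teval (X i) t2)) => H.
  + have -> : pb (cls (fun i => teval (X i) t1) = cls (fun i => teval (X i) t2)) = true.
      by apply/pbP; apply/cls_eq.
    symmetry; apply: lim_eq; apply: (uM H) => i Hi; have -> // : pb (teval (X i) t1 = teval (X i) t2) = true.
    exact/pbP.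
  + have -> : pb (cls (fun i => teval (X i) t1) = cls (fun i => teval (X i) t2)) = false.
      apply/negbTE/negP => /pbP /cls_eq H2.
      by have [i [? ?]] := U_ne (uI HU H H2).
    symmetry; apply: lim_eq; apply: (uM H) => i Hi; have -> // : pb (teval (X i) t1 = teval (X i) t2) = false.
    by apply/negbTE/negP => /pbP.
- by rewrite lim_const.
- by rewrite IHp IHq lim2.
- by rewrite IHp IHq lim2.
- by rewrite IHp IHq (lim2 Order.meet).
- by rewrite IHp IHq (lim2 Order.join).
- rewrite (_ : (fun i => eval (cenv X) (args i)) = fun j => lim (fun i => eval (X i) (args j))).
    by rewrite (limn (@xint _ _ S o)).
  by apply: functional_extensionality => j; rewrite IH.
- pose b := fun i => infA (fun m => eval (upd (X i) x m) p).
  have Hw : forall i, exists m, eval (upd (X i) x m) p = b i.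
    move=> i; exact: infA_att (dom_ne (Ms i)).
  pose y : Pr := fun i => proj1_sig (constructive_indefinite_description _ (Hw i)).
  have Hy : forall i, eval (upd (X i) x (y i)) p = b i.
    move=> i; rewrite /y; case: constructive_indefinite_description => //.
  apply/eqP; rewrite eq_le; apply/andP; split.
    apply: le_trans (infA_lb _ (cls y)) _.
    rewrite upd_cenv IH; have -> // : (fun i => eval (upd (X i) x (y i)) p) = b by apply: functional_extensionality => i; exact: Hy.
  apply: infA_glb => m; rewrite -(cls_rep m) upd_cenv IH.
  have [i [H1 H2]] := U_ne (uI HU (lim_spec b) (lim_spec (fun i => eval (upd (X i) x (rep m i)) p))).
  by rewrite -H1 -H2 /b infA_lb.
- pose b := fun i => supA (fun m => eval (upd (X i) x m) p).
  have Hw : forall i, exists m, eval (upd (X i) x m) p = b i.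
    move=> i; exact: supA_att (dom_ne (Ms i)).
  pose y : Pr := fun i => proj1_sig (constructive_indefinite_description _ (Hw i)).
  have Hy : forall i, eval (upd (X i) x (y i)) p = b i.
    move=> i; rewrite /y; case: constructive_indefinite_description => //.
  apply/eqP; rewrite eq_le; apply/andP; split; last first.
    apply: le_trans _ (supA_ub _ (cls y)).
    rewrite upd_cenv IH; have -> // : (fun i => eval (upd (X i) x (y i)) p) = b by apply: functional_extensionality => i; exact: Hy.
  apply: supA_lub => m; rewrite -(cls_rep m) upd_cenv IH.
  have [i [H1 H2]] := U_ne (uI HU (lim_spec b) (lim_spec (fun i => eval (upd (X i) x (rep m i)) p))).
  rewrite -H1 -H2 /b; exact: (supA_ub (fun m0 => eval (upd (X i) x m0) p) (rep m i)).
Qed.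

Lemma env_cenv (e : nat -> dom Ust) : e = cenv (fun i n => rep (e n) i).
Proof. apply: functional_extensionality => n; by rewrite /cenv cls_rep. Qed.

Lemma holds_Ust (phi : fml L S) : U (fun i => holds (Ms i) phi) -> holds Ust phi.
Proof.
move=> H e; rewrite (env_cenv e) los; apply: lim_eq; apply: (uM H) => i; apply.
Qed.

Lemma nholds_Ust (phi : fml L S) : U (fun i => ~ holds (Ms i) phi) -> ~ holds Ust phi.
Proof.
move=> H Hh.
have Hw : forall i, exists e : nat -> dom (Ms i), ~ holds (Ms i) phi -> eval e phi <> \top.
  move=> i; case: (classic (holds (Ms i) phi)) => Hi.
    by exists (fun _ => ne_pt i).
  have [e He] : exists e : nat -> dom (Ms i), eval e phi <> \top.
    by apply: NNPP => Hn; apply: Hi => e; apply: NNPP => He; apply: Hn; exists e.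
  by exists e.
pose X := fun i => proj1_sig (constructive_indefinite_description _ (Hw i)).
have HX : forall i, ~ holds (Ms i) phi -> eval (X i) phi <> \top.
  by move=> i; rewrite /X; case: constructive_indefinite_description.
have := Hh (cenv X); rewrite los => E.
have [i [H1 H2]] := U_ne (uI HU H (lim_spec (fun i => eval (X i) phi))).
by apply: (HX i H1); rewrite H2 E.
Qed.

End Ultra.


Section Basics.
Variables (d : Order.disp_t) (A : finTBOrderType d) (S : MTLchain A) (L : Lang).

Lemma topP (a : A) : \top <= a -> a = \top.
Proof. move=> H; apply/eqP; rewrite eq_le H lex1. done. Qed.

Lemma infA_top (D : Type) (f : D -> A) : infA f = \top <-> forall m, f m = \top.
Proof.
split.
  move=> H m; apply: topP; rewrite -H; exact: infA_lb.
move=> H; apply: topP; apply: infA_glb => m; by rewrite H.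
Qed.

Lemma meetT (a b : A) : Order.meet a b = \top <-> a = \top /\ b = \top.
Proof.
split.
  move=> H; have : \top <= Order.meet a b by rewrite H.
  by rewrite lexI => /andP [/topP -> /topP ->].
by move=> [-> ->]; rewrite meetxx.
Qed.

Lemma imp_top (a b : A) : mimp S a b = \top <-> a <= b.
Proof.
have E : (\top <= mimp S a b) = (a <= b).
  by rewrite -mresid mconjC mconj1.
split; first by move=> H; rewrite -E H.
by move=> H; apply: topP; rewrite E.
Qed.

Lemma holds_All (M : structure L A) x (p : fml L S) :
  holds M (FAll x p) <-> holds M p.
Proof.
split.
  move=> H e; have := H e => /= /infA_top /(_ (e x)).
  suff -> : upd e x (e x) = e by [].
  by apply: functional_extensionality => n; rewrite /upd; case: eqP => // ->.
by move=> H e /=; apply/infA_top => m; apply: H.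
Qed.

Lemma holds_foldr (M : structure L A) xs (q : fml L S) :
  holds M (foldr (@FAll L A _ _) q xs) <-> holds M q.
Proof. elim: xs => [|x xs IH] //=; rewrite holds_All; exact: IH. Qed.

Lemma free_foldr x xs (q : fml L S) :
  free x (foldr (@FAll L A _ _) q xs) = (x \notin xs) && free x q.
Proof.
elim: xs => [|y xs IH] //=; rewrite IH inE negb_or andbA. done.
Qed.

Variables (M N : structure L A) (h : dom M -> dom N) (Hh : substr h).

Lemma teval_h (e : nat -> dom M) t : h (teval e t) = teval (fun n => h (e n)) t.
Proof.
elim: t => [n|f ts IH] //=; case: Hh => _ [Hf _]; rewrite Hf; congr fint.
by apply: functional_extensionality => j; rewrite IH.
Qed.

Lemma eval_qf (q : fml L S) e : qfree q -> eval e q = eval (fun n => h (e n)) q.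
Proof.
case: Hh => Hinj [_ Hp].
elim: q e => [p ts|t1 t2|a|p IHp q IHq|p IHp q IHq|p IHp q IHq|p IHp q IHq|o args IH|x p IH|x p IH] e //=.
- move=> _; rewrite -Hp; f_equal; apply: functional_extensionality => j; exact: teval_h.
- move=> _; rewrite -!teval_h; congr (if _ then _ else _); rewrite /pb.
  case: excluded_middle_informative; case: excluded_middle_informative => //.
  + by move=> H1 H2; exfalso; apply: H1; rewrite H2.
  + by move=> H1 H2; exfalso; apply: H2; apply: Hinj.
- by move=> /andP [H1 H2]; rewrite IHp // IHq.
- by move=> /andP [H1 H2]; rewrite IHp // IHq.
- by move=> /andP [H1 H2]; rewrite IHp // IHq.
- by move=> /andP [H1 H2]; rewrite IHp // IHq.
- move=> /forallP H; congr xint; apply: functional_extensionality => j; exact: IH.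
Qed.

End Basics.


Lemma inP (T : eqType) (x : T) (s : seq T) : List.In x s <-> x \in s.
Proof.
elim: s => [|a s IH] //=; rewrite inE; split.
  by move=> [->|/IH ->]; rewrite ?eqxx ?orbT.
by move=> /orP [/eqP ->|/IH]; [left|right].
Qed.

Lemma In_enum n (j : 'I_n) : List.In j (enum 'I_n).
Proof. by apply/inP; rewrite mem_enum. Qed.

Section Pos.
Variables (D : Type).
Definition vpos (el : list D) (m : D) : nat :=
  epsilon (inhabits 0) (fun k => List.nth_error el k = Some m).
Definition e0 (el : list D) (dflt : D) (k : nat) : D :=
  match List.nth_error el k with Some m => m | None => dflt end.
Lemma e0_vpos el dflt m : List.In m el -> e0 el dflt (vpos el m) = m.
Proof.
move=> Hm; have H := List.In_nth_error _ _ Hm; rewrite /e0 /vpos.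
by rewrite (epsilon_spec (inhabits 0) (fun k => List.nth_error el k = Some m) H).
Qed.
End Pos.

Inductive fact (L : Lang) (D : Type) :=
| FF (f : Fsym L) of ('I_(far f) -> D)
| FP (p : Psym L) of ('I_(par p) -> D)
| FN of D & D.

Section Diagram.
Variables (d : Order.disp_t) (A : finTBOrderType d) (S : MTLchain A) (L : Lang).
Variables (M : structure L A).
Hypothesis Htb : (\top : A) <> \bot.
Variable c : A.
Hypothesis Hc1 : c <> \top.
Hypothesis Hc2 : forall a : A, a <> \top -> a <= c.

Definition sat (N : structure L A) (g : dom M -> dom N) (fa : fact L (dom M)) : Prop :=
  match fa with
  | FF f args => g (@fint _ _ M f args) = @fint _ _ N f (fun j => g (args j))
  | FP p args => @pint _ _ N p (fun j => g (args j)) = @pint _ _ M p args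
  | FN a b => a <> b -> g a <> g b
  end.

Definition elems (fa : fact L (dom M)) : list (dom M) :=
  match fa with
  | FF f args => @fint _ _ M f args :: List.map args (enum 'I_(far f))
  | FP p args => List.map args (enum 'I_(par p))
  | FN a b => a :: b :: nil
  end.

Definition ffml (v : dom M -> nat) (fa : fact L (dom M)) : fml L S :=
  match fa with
  | FF f args => FEq (Var (v (@fint _ _ M f args))) (App f (fun j => Var (v (args j))))
  | FP p args => FMeet (FImp (FPred p (fun j => Var (v (args j)))) (FConst (@pint _ _ M p args)))
                       (FImp (FConst (@pint _ _ M p args)) (FPred p (fun j => Var (v (args j)))))
  | FN a b => if pb (a = b) then FConst \top else FImp (FEq (Var (v a)) (Var (v b))) (FConst \bot)
  end.

Lemma pb_top (P : Prop) : (if pb P then \top else \bot : A) = \top -> P.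
Proof. rewrite /pb; destruct (excluded_middle_informative P) as [p|np] => // H; by exfalso; apply: Htb. Qed.

Lemma ffml_sat (N : structure L A) (e : nat -> dom N) v fa :
  eval e (ffml v fa) = \top -> sat (fun m => e (v m)) fa.
Proof.
case: fa => [f args|p args|a b] /=.
- by move/pb_top.
- move=> /meetT [/imp_top H1 /imp_top H2]; apply/eqP; rewrite eq_le H1 H2 //.
- rewrite /pb; destruct (excluded_middle_informative (a = b)) as [Hab|Hab].
    by move=> _ nab; case: (nab Hab).
  move=> /= /imp_top H _ E; move: H; rewrite /= E /pb.
  destruct (excluded_middle_informative (e (v b) = e (v b))) as [ee|nn] => H; last by exfalso; exact (nn erefl).
  by apply: Htb; apply/eqP; rewrite eq_le H le0x.
Qed.

Lemma ffml_M v dfl (el : list (dom M)) fa :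
  (forall m, List.In m (elems fa) -> e0 el dfl (v m) = m) ->
  eval (e0 el dfl) (ffml v fa) = \top.
Proof.
case: fa => [f args|p args|a b] /= H.
- have -> : pb (e0 el dfl (v (fint args)) = fint (fun j => e0 el dfl (v (args j)))) = true.
    apply/pbP; rewrite H; last by left.
    congr fint; apply: functional_extensionality => j; symmetry; apply: H; right.
    apply: List.in_map; exact: In_enum.
  done.
- have -> : (fun j => e0 el dfl (v (args j))) = args.
    apply: functional_extensionality => j; apply: H; apply: List.in_map; exact: In_enum.
  by apply/meetT; split; apply/imp_top.
- rewrite /pb; destruct (excluded_middle_informative (a = b)) as [Hab|Hab] => //=.
  rewrite !H; [|by right;left|by left].
  rewrite /pb; destruct (excluded_middle_informative (a = b)) as [E|E] => //=; by apply/imp_top.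
Qed.

Lemma free_ffml v fa x : free x (ffml v fa) -> exists m, List.In m (elems fa) /\ x = v m.
Proof.
case: fa => [f args|p args|a b] /=.
- case/orP => [/eqP <-|/existsP [j /eqP <-]]; first by exists (fint args); split => //; left.
  exists (args j); split => //; right; apply: List.in_map; exact: In_enum.
- rewrite orbF /= => /orP [] /existsP [j /eqP <-]; exists (args j); split => //; apply: List.in_map; exact: In_enum.
- rewrite /pb; case: excluded_middle_informative => //= _; rewrite orbF.
  case/orP => /eqP <-; [exists a|exists b]; split => //; [left|right;left] => //.
Qed.

Lemma qfree_ffml v fa : qfree (ffml v fa).
Proof. case: fa => [f args|p args|a b] //=; rewrite /pb; case: excluded_middle_informative => //. Qed.

End Diagram.


Section Main.
Variables (d : Order.disp_t) (A : finTBOrderType d) (S : MTLchain A) (L : Lang).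
Variables (T : fml L S -> Prop) (phi : fml L S).

Definition Gam (psi : fml L S) := sentence psi /\ universal psi /\
  (forall N, model T N -> holds N phi -> holds N psi).

Section Diag.
Hypothesis Hpres : preserved_sub T phi.
Hypothesis Htb : (\top : A) <> \bot.
Variable c : A.
Hypothesis Hc1 : c <> \top.
Hypothesis Hc2 : forall a : A, a <> \top -> a <= c.
Variable M : structure L A.
Hypothesis HM : model T M.
Hypothesis HG : forall psi, Gam psi -> holds M psi.

Definition delta (v : dom M -> nat) (F : list (fact L (dom M))) : fml L S :=
  foldr (fun fa acc => FMeet (ffml S v fa) acc) (FConst \top) F.

Lemma eval_delta (N : structure L A) (e : nat -> dom N) v F :
  eval e (delta v F) = \top <-> forall fa, List.In fa F -> eval e (ffml S v fa) = \top.
Proof.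
elim: F => [|fa F IH] /=; first by split.
rewrite meetT IH; split.
  by move=> [H1 H2] fa' [<-|/H2].
by move=> H; split; [apply: H; left|move=> fa' Hf; apply: H; right].
Qed.

Lemma free_delta v F x : free x (delta v F) -> exists2 fa, List.In fa F & free x (ffml S v fa).
Proof.
elim: F => [|fa F IH] //= /orP [H|/IH [fa' H1 H2]]; first by exists fa => //; left.
by exists fa' => //; right.
Qed.

Lemma qfree_delta v F : qfree (delta v F).
Proof. elim: F => [|fa F IH] //=; rewrite IH qfree_ffml. done. Qed.

Definition elF (F : list (fact L (dom M))) : list (dom M) :=
  foldr (fun fa acc => elems fa ++ acc) nil F.

Lemma In_elF F fa m : List.In fa F -> List.In m (elems fa) -> List.In m (elF F).
Proof.
elim: F => [|fa' F IH] //= [<-|H] Hm; apply: List.in_or_app; first by left.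
by right; apply: IH.
Qed.

Definition Fdom : Type := list (fact L (dom M)).
Definition NG_t := {N : structure L A & dom M -> dom N}.

Lemma exN (F : Fdom) : exists NG : NG_t, model T (projT1 NG) /\ holds (projT1 NG) phi /\
  forall fa, List.In fa F -> sat (projT2 NG) fa.
Proof.
apply: NNPP => Hno.
pose el := elF F.
pose v := vpos el.
pose dfl := epsilon (dom_ne M) (fun _ => True).
pose psi := foldr (@FAll L A _ _) (FImp (delta v F) (FConst c)) (List.map v el).
have Gpsi : Gam psi.
  split; [|split].
  - move=> x; rewrite /psi free_foldr /=; apply/negP => /andP [Hx]; rewrite orbF.
    move=> /free_delta [fa Hfa /free_ffml [m [Hm Ex]]].
    move/negP: Hx; apply; rewrite Ex; apply/inP; apply: List.in_map; exact: In_elF Hfa Hm.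
  - exists (List.map v el), (FImp (delta v F) (FConst c)); split => //=.
    by rewrite qfree_delta.
  - move=> N HN Hph; apply/holds_foldr => e /=; apply/imp_top.
    case: (classic (eval e (delta v F) = \top)) => E; last exact: Hc2.
    exfalso; apply: Hno; exists (existT _ N (fun m => e (v m))); split => //; split => //=.
    move=> fa Hfa; apply: (ffml_sat Htb); move/eval_delta: E; exact.
have := HG Gpsi; move/holds_foldr => /(_ (e0 el dfl)) /= /imp_top.
have -> : eval (e0 el dfl) (delta v F) = \top.
  apply/eval_delta => fa Hfa; apply: ffml_M => m Hm; apply: e0_vpos; exact: In_elF Hfa Hm.
by move=> /topP.
Qed.

Definition NG (F : Fdom) : NG_t := proj1_sig (constructive_indefinite_description _ (exN F)).
Lemma NG_spec F : model T (projT1 (NG F)) /\ holds (projT1 (NG F)) phi /\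
  forall fa, List.In fa F -> sat (projT2 (NG F)) fa.
Proof. rewrite /NG; case: constructive_indefinite_description => //. Qed.

Lemma diag : holds M phi.
Proof.
have Hd : forall F1 F2 : Fdom, exists F3 : Fdom, forall F' : Fdom,
    (forall fa, List.In fa F3 -> List.In fa F') ->
    (forall fa, List.In fa F1 -> List.In fa F') /\ (forall fa, List.In fa F2 -> List.In fa F').
  move=> F1 F2; exists (F1 ++ F2) => F' H; split => fa Hf; apply: H; apply: List.in_or_app; [left|right] => //.
have Hn : forall F : Fdom, exists F', forall fa, List.In fa F -> List.In fa F'.
  by move=> F; exists F.
have [U [HU HB]] := @UF.ultra_ex Fdom Fdom (fun (F F' : Fdom) => forall fa, List.In fa F -> List.In fa F')
   (inhabits nil) Hn Hd.
pose Ms := fun F => projT1 (NG F).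
pose N := Ust U Ms.
pose h := fun m : dom M => cls U (Ms := Ms) (fun F => projT2 (NG F) m).
have Hall : forall P : Fdom -> Prop, (forall F, P F) -> U P.
  by move=> P HP; apply: (uM HU (uT HU)).
have Hfa : forall fa, U (fun F => sat (projT2 (NG F)) fa).
  move=> fa; apply: (uM HU (HB (fa :: nil))) => F HF.
  have [_ [_ H]] := NG_spec F; apply: H; apply: HF; by left.
apply: (Hpres (N := N) (h := h)) => //.
- split; [|split].
  + move=> m1 m2 /(cls_eq HU) E; apply: NNPP => Hne.
    have [F [H1 H2]] := U_ne HU (uI HU E (Hfa (@FN L (dom M) m1 m2))).
    exact: (H2 Hne H1).
  + move=> f args /=; rewrite /h (fint_cls HU); apply/(cls_eq HU).
    by apply: (uM HU (Hfa (@FF L (dom M) f args))) => F.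
  + move=> p args /=; rewrite /h (pint_cls HU); apply: (lim_eq HU).
    by apply: (uM HU (Hfa (@FP L (dom M) p args))) => F.
- move=> chi Hchi; apply: (holds_Ust HU); apply: Hall => F.
  by have [H _] := NG_spec F; apply: H.
- apply: (holds_Ust HU); apply: Hall => F.
  by have [_ [H _]] := NG_spec F.
Qed.

End Diag.
End Main.


Section Main2.
Variables (d : Order.disp_t) (A : finTBOrderType d) (S : MTLchain A) (L : Lang).
Variables (T : fml L S -> Prop) (phi : fml L S).

Definition udec (psi : fml L S) : seq nat * fml L S :=
  epsilon (inhabits (nil, FConst \top))
    (fun pq => qfree pq.2 /\ psi = foldr (@FAll L A _ _) pq.2 pq.1).

Lemma udec_spec psi : universal psi ->
  qfree (udec psi).2 /\ psi = foldr (@FAll L A _ _) (udec psi).2 (udec psi).1.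
Proof.
move=> [xs [q [H1 H2]]]; rewrite /udec.
apply: (epsilon_spec (inhabits (nil, FConst \top))
    (fun pq : seq nat * fml L S => qfree pq.2 /\ psi = foldr (@FAll L A _ _) pq.2 pq.1)).
by exists (xs, q).
Qed.

Definition bigq (Dl : list (fml L S)) : fml L S :=
  foldr (fun psi acc => FMeet (udec psi).2 acc) (FConst \top) Dl.
Definition bigv (Dl : list (fml L S)) : seq nat :=
  foldr (fun psi acc => (udec psi).1 ++ acc) nil Dl.
Definition psiD Dl := foldr (@FAll L A _ _) (bigq Dl) (bigv Dl).

Lemma eval_bigq (N : structure L A) (e : nat -> dom N) Dl :
  eval e (bigq Dl) = \top <-> forall psi, List.In psi Dl -> eval e (udec psi).2 = \top.
Proof.
elim: Dl => [|p Dl IH] /=; first by split.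
rewrite meetT IH; split.
  by move=> [H1 H2] p' [<-|/H2].
by move=> H; split; [apply: H; left|move=> p' Hf; apply: H; right].
Qed.

Lemma holds_psiD (N : structure L A) Dl : (forall psi, List.In psi Dl -> universal psi) ->
  holds N (psiD Dl) <-> forall psi, List.In psi Dl -> holds N psi.
Proof.
move=> HU; rewrite holds_foldr; split.
  move=> H psi Hp; have [_ ->] := udec_spec (HU _ Hp); apply/holds_foldr => e.
  by move/eval_bigq: (H e); apply.
move=> H e; apply/eval_bigq => psi Hp.
have := H _ Hp; have [_ E] := udec_spec (HU _ Hp); rewrite {1}E => /holds_foldr; exact.
Qed.

Lemma Gam_psiD Dl : (forall psi, List.In psi Dl -> Gam T phi psi) -> Gam T phi (psiD Dl).
Proof.
move=> HG.
have HU : forall psi, List.In psi Dl -> universal psi by move=> psi /HG [_ []].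
split; [|split].
- move=> x; rewrite /psiD free_foldr; apply/negP => /andP [Hx].
  move/negP: Hx; elim: Dl HG HU => [|p Dl IH] HG HU //= Hx /orP [H|H].
    have [Hs _] := HG p (or_introl erefl).
    have [_ E] := udec_spec (HU p (or_introl erefl)).
    move: (Hs x); rewrite E free_foldr H andbT negbK => Hin.
    by apply: Hx; rewrite mem_cat Hin.
  apply: (IH _ _ _ H).
  + by move=> q Hq; apply: HG; right.
  + by move=> q Hq; apply: HU; right.
  + by move=> Hin; apply: Hx; rewrite mem_cat Hin orbT.
- exists (bigv Dl), (bigq Dl); split => //.
  elim: Dl {HG} HU => [|p Dl IH] HU //=.
  rewrite IH; last by move=> q Hq; apply: HU; right.
  by rewrite (udec_spec (HU p (or_introl erefl))).1.
- move=> N HN Hp; apply/holds_psiD => // psi Hpsi.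
  by have [_ [_ H]] := HG _ Hpsi; apply: H.
Qed.

Lemma all_top : (\top : A) = \bot -> forall a : A, a = \top.
Proof. move=> E a; apply/eqP; rewrite eq_le lex1 E le0x. done. Qed.

Lemma coatom : (\top : A) <> \bot ->
  exists c : A, c <> \top /\ forall a : A, a <> \top -> a <= c.
Proof.
move=> Htb.
have Hin : (\bot : A) \in [seq a <- enum A | a != \top].
  rewrite mem_filter mem_enum andbT; apply/eqP => E; by apply: Htb.
have [c cs Hc] := seq_max Hin.
move: cs; rewrite mem_filter => /andP [/eqP ct _].
exists c; split => // a /eqP at_; apply: Hc; by rewrite mem_filter mem_enum at_.
Qed.

Lemma easy_dir : (exists psi : fml L S,
     sentence psi /\ universal psi /\
     (forall M : structure L A, model T M -> (holds M phi <-> holds M psi))) ->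
  preserved_sub T phi.
Proof.
move=> [psi [_ [[xs [q [Hq Ep]]] Heq]]] M N h Hh HM HN HNp; subst psi.
apply/(Heq _ HM); apply/holds_foldr => e.
rewrite (eval_qf Hh) //.
by move/(Heq _ HN)/holds_foldr: HNp; apply.
Qed.

Lemma triv_psi : (forall M : structure L A, model T M -> holds M phi) ->
  exists psi : fml L S,
     sentence psi /\ universal psi /\
     (forall M : structure L A, model T M -> (holds M phi <-> holds M psi)).
Proof.
move=> H; exists (FConst \top); split => //; split.
  by exists nil, (FConst \top).
by move=> M HM; split => _; [move=> e|apply: H].
Qed.

Lemma hard_dir : preserved_sub T phi -> exists psi : fml L S,
     sentence psi /\ universal psi /\
     (forall M : structure L A, model T M -> (holds M phi <-> holds M psi)).
Proof.
move=> Hpres; apply: NNPP => Hno.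
case: (classic ((\top : A) = \bot)) => Htb.
  by apply: Hno; apply: triv_psi => M _ e; apply: all_top.
case: (classic (exists M0 : structure L A, model T M0)) => [[M0 HM0]|HnM]; last first.
  by apply: Hno; apply: triv_psi => M HM; exfalso; apply: HnM; exists M.
have [c [Hc1 Hc2]] := coatom Htb.
have HMD : forall Dl : list (fml L S), exists N : structure L A, model T N /\
    ((forall psi, List.In psi Dl -> Gam T phi psi) ->
     (forall psi, List.In psi Dl -> holds N psi) /\ ~ holds N phi).
  move=> Dl; case: (classic (forall psi, List.In psi Dl -> Gam T phi psi)) => HD; last first.
    by exists M0; split.
  apply: NNPP => Hn; apply: Hno; exists (psiD Dl).
  have [Hs [Hu Hi]] := Gam_psiD HD; split => //; split => // N HN; split; first exact: Hi.
  move=> Hps; apply: NNPP => Hnp; apply: Hn; exists N; split => // _; split => //.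
  by apply/holds_psiD => // psi /HD [_ []].
pose MD := fun Dl => proj1_sig (constructive_indefinite_description _ (HMD Dl)).
have MD_spec : forall Dl, model T (MD Dl) /\
    ((forall psi, List.In psi Dl -> Gam T phi psi) ->
     (forall psi, List.In psi Dl -> holds (MD Dl) psi) /\ ~ holds (MD Dl) phi).
  by move=> Dl; rewrite /MD; case: constructive_indefinite_description.
pose J := {Dl : list (fml L S) | forall psi, List.In psi Dl -> Gam T phi psi}.
pose Bs := fun (j : J) (Dl : list (fml L S)) =>
  (forall psi, List.In psi (proj1_sig j) -> List.In psi Dl) /\ (forall psi, List.In psi Dl -> Gam T phi psi).
have Hd : forall j1 j2 : J, exists j3 : J, forall Dl, Bs j3 Dl -> Bs j1 Dl /\ Bs j2 Dl.
  move=> [D1 H1] [D2 H2].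
  have H3 : forall psi, List.In psi (D1 ++ D2) -> Gam T phi psi.
    by move=> psi Hp; case: (List.in_app_or _ _ _ Hp); [exact: H1|exact: H2].
  exists (exist (fun Dl => forall psi, List.In psi Dl -> Gam T phi psi) (D1 ++ D2) H3).
  move=> Dl [HB1 HB2]; split; split => //= psi Hp; apply: HB1; apply: List.in_or_app; by [left|right].
have Hn : forall j : J, exists Dl, Bs j Dl.
  by move=> [D1 H1]; exists D1; split.
have Hj : inhabited J by apply: inhabits; exists nil.
have [U [HU HB]] := @UF.ultra_ex (list (fml L S)) J Bs Hj Hn Hd.
pose Mst := Ust U MD.
have HGok : U (fun Dl => forall psi, List.In psi Dl -> Gam T phi psi).
  have [j0] := Hj; by apply: (uM HU (HB j0)) => Dl [_ H].
apply: (nholds_Ust HU (Ms := MD) (phi := phi)).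
  by apply: (uM HU HGok) => Dl HD; have [_ H] := MD_spec Dl; have [] := H HD.
apply: (diag Hpres Htb Hc1 Hc2).
- move=> chi Hchi; apply: (holds_Ust HU); apply: (uM HU (uT HU)) => Dl _.
  by have [H _] := MD_spec Dl; apply: H.
- move=> psi Hpsi; apply: (holds_Ust HU).
  have Hj1 : forall q, List.In q (psi :: nil) -> Gam T phi q by move=> q [<-|].
  apply: (uM HU (HB (exist _ _ Hj1))) => Dl [/= Hin HD].
  have [_ H] := MD_spec Dl; have [H1 _] := H HD; apply: H1; apply: Hin; by left.
Qed.

End Main2.

Theorem mainTheorem5 (d : Order.disp_t) (A : finTBOrderType d) (S : MTLchain A)
  (L : Lang) (T : fml L S -> Prop) (phi : fml L S) :
  (forall chi, T chi -> sentence chi) -> sentence phi ->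
  (preserved_sub T phi <->
   exists psi : fml L S,
     sentence psi /\ universal psi /\
     (forall M : structure L A, model T M -> (holds M phi <-> holds M psi))).
Proof.
move=> _ _; split; [exact: hard_dir|exact: easy_dir].
Qed.
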